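(* For $3\le n\le m$ and $2\le 2r<n$, there exists a set $S\subset\mathrm{GF}(q^m)^n$ with rank diameter $2r$ such that $|S|>V_r(q^m,n)$.
   Context: The rank $\mathrm{rk}(\mathbf x)$ of $\mathbf x\in\mathrm{GF}(q^m)^n$ is the maximum number of its coordinates linearly independent over $\mathrm{GF}(q)$, and $d_{\mathrm R}(\mathbf x,\mathbf y)=\mathrm{rk}(\mathbf x-\mathbf y)$. The diameter of a set is the maximum rank distance between two of its elements. $V_r(q^m,n)$ is the number of vectors of $\mathrm{GF}(q^m)^n$ within rank distance $r$ of a fixed vector, i.e. $V_r(q^m,n)=\sum_{u=0}^r {n\brack u}\alpha(m,u)$ with $\alpha(m,0)=1$, $\alpha(m,u)=\prod_{i=0}^{u-1}(q^m-q^i)$ and ${n\brack u}=\alpha(n,u)/\alpha(u,u)$ the Gaussian binomial. *)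

(* Defs.v *)
From HB Require Import structures.
From mathcomp Require Import all_boot all_order all_algebra all_field.
Set Implicit Arguments. Unset Strict Implicit. Unset Printing Implicit Defensive.
Import GRing.Theory.

(* GF(q) is modelled by a finite field F (q = #|F|), and GF(q^m) by a field
   extension L of F of degree m (\dim {:L} = m).  Vectors of GF(q^m)^n are
   row vectors 'rV[L]_n. *)

Local Open Scope ring_scope.

Definition rk (F : fieldType) (L : fieldExtType F) (n : nat) (x : 'rV[L]_n) : nat :=
  \dim <<[seq x ord0 i | i <- enum 'I_n]>>%VS.

Definition rdist (F : fieldType) (L : fieldExtType F) (n : nat)
  (x y : 'rV[L]_n) : nat := rk (x - y).

Definition rank_diameter_eq (F : fieldType) (L : fieldExtType F) (n : nat)
  (S : seq 'rV[L]_n) (d : nat) : Prop :=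
  (forall x y, x \in S -> y \in S -> rdist x y <= d)%N /\
  (exists x y, [/\ x \in S, y \in S & rdist x y = d]).

Local Close Scope ring_scope.

Definition alpha (q m u : nat) : nat := \prod_(i < u) (q ^ m - q ^ i).

Definition gbin (q n u : nat) : nat := alpha q n u %/ alpha q u u.

Definition Vr (q m n r : nat) : nat :=
  \sum_(u < r.+1) gbin q n u * alpha q m u.

(* Main.v *)
Require Import Defs.
From HB Require Import structures.
From mathcomp Require Import all_boot all_order all_algebra all_field zify.
Import GRing.Theory VectorInternalTheory.
Lemma alpha_le q k u : alpha q k u.+1 <= (q^k - 1) * q^(k*u).
Proof.
rewrite /alpha big_ord_recl expn0 leq_mul2l; apply/orP; right.
apply: leq_trans (_ : \prod_(i < u) q^k <= _).
  by apply: leq_prod => i _; exact: leq_subr.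
by rewrite prod_nat_const card_ord expnM.
Qed.

Lemma sum_le q m n r : 2 <= q -> 1 <= n -> 1 <= m ->
  \sum_(u < r.+1) alpha q n u * alpha q m u <= q^(r*(n+m)).
Proof.
move=> q2 n1 m1; elim: r => [|r IH].
  by rewrite big_ord_recl big_ord0 /alpha !big_ord0.
rewrite big_ord_recr /=.
have h1 := alpha_le q n r; have h2 := alpha_le q m r.
have hA : 2 <= q ^ n by apply: leq_trans (leq_pexp2l _ n1) ; rewrite ?expn1 //; lia.
have hB : 2 <= q ^ m by apply: leq_trans (leq_pexp2l _ m1) ; rewrite ?expn1 //; lia.
have h3 := leq_mul h1 h2.
have -> : r.+1 * (n + m) = n + m + r * (n+m) by rewrite mulSn.
rewrite expnD.
set P := q ^ (r * (n+m)).
have eP : (q ^ n - 1) * q ^ (n * r) * ((q ^ m - 1) * q ^ (m * r)) = ((q^n - 1) * (q^m - 1)) * P.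
  by rewrite /P mulnDr expnD (mulnC r n) (mulnC r m) mulnACA.
rewrite eP in h3.
have hP : 0 < P by rewrite expn_gt0; lia.
set A := q ^ n in hA h3 eP *; set B := q ^ m in hB h3 eP *.
rewrite expnD -/A -/B.
have hk : (A-1)*(B-1) + 1 <= A*B by clear -hA hB; nia.
have := leq_mul hk (leqnn P); rewrite mulnDl mul1n => hh.
apply: leq_trans (leq_add IH h3) _; rewrite addnC; exact: hh.
Qed.

Lemma Vr_lt q m n r : 2 <= q -> 1 <= n -> 1 <= m -> 1 <= r ->
  Vr q m n r < q^(r*(n+m)).
Proof.
move=> q2 n1 m1; case: r => // r _.
apply: (@leq_ltn_trans (\sum_(u < r.+2) alpha q n u * alpha q m u)).
  by rewrite /Vr; apply: leq_sum => u _; rewrite leq_mul2r leq_div orbT.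
rewrite big_ord_recr /=.
have IH := @sum_le q m n r q2 n1 m1.
have h1 := alpha_le q n r; have h2 := alpha_le q m r.
have hA : 2 <= q ^ n by apply: leq_trans (leq_pexp2l _ n1) ; rewrite ?expn1 //; lia.
have hB : 2 <= q ^ m by apply: leq_trans (leq_pexp2l _ m1) ; rewrite ?expn1 //; lia.
have h3 := leq_mul h1 h2.
have -> : r.+1 * (n + m) = n + m + r * (n+m) by rewrite mulSn.
set P := q ^ (r * (n+m)) in IH *.
have eP : (q ^ n - 1) * q ^ (n * r) * ((q ^ m - 1) * q ^ (m * r)) = ((q^n - 1) * (q^m - 1)) * P.
  by rewrite /P mulnDr expnD (mulnC r n) (mulnC r m) mulnACA.
rewrite eP in h3.
have hP : 0 < P by rewrite expn_gt0; lia.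
rewrite !expnD -/P.
set A := q ^ n in hA h3 eP *; set B := q ^ m in hB h3 eP *.
have hk : (A-1)*(B-1) + 2 <= A*B by clear -hA hB; nia.
have := leq_mul hk (leqnn P); rewrite mulnDl => hh.
apply: leq_ltn_trans (leq_add IH h3) _; rewrite addnC.
apply: leq_trans hh; rewrite -addnS leq_add2l mul2n -addnn.
lia.
Qed.

Section Vec.
Variables (F : finFieldType) (L : fieldExtType F).
Local Open Scope ring_scope.

Lemma rk_le n k (z : 'rV[L]_n) :
  (forall j : 'I_n, (k <= j)%N -> z ord0 j = 0) -> (rk z <= k)%N.
Proof.
move=> hz; rewrite /rk.
set g := fun i : nat => oapp (fun j : 'I_n => z ord0 j) 0 (insub i).
set Y := [seq g i | i <- iota 0 k].
apply: leq_trans (_ : (\dim <<Y>> <= k)%N).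
  apply: dimvS; apply/span_subvP => v /mapP [j _ ->].
  case: (ltnP j k) => hj.
    apply: memv_span; apply/mapP; exists (val j); first by rewrite mem_iota.
    by rewrite /g valK.
  by rewrite hz // mem0v.
by apply: leq_trans (dim_span _) _; rewrite size_map size_iota.
Qed.

Definition gvec n k (f : {ffun 'I_k -> 'rV[F]_(dim L)}) : 'rV[L]_n :=
  \row_j oapp (fun i => r2v (f i)) 0 (insub (val j)).

Lemma gvec_hi n k f (j : 'I_n) : (k <= j)%N -> gvec n k f ord0 j = 0.
Proof. by move=> h; rewrite mxE insubF // ltnNge h. Qed.

Lemma gvec_lo n k f (i : 'I_k) (j : 'I_n) : val j = val i -> gvec n k f ord0 j = r2v (f i).
Proof. by move=> h; rewrite mxE h valK. Qed.


Lemma gvec_inj n k (hk : (k <= n)%N) : injective (gvec n k).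
Proof.
move=> f f' e; apply/ffunP => i.
have := congr1 (fun x : 'rV[L]_n => x ord0 (widen_ord hk i)) e => /=.
by rewrite (gvec_lo n k f i (widen_ord hk i) erefl) (gvec_lo n k f' i (widen_ord hk i) erefl) => /r2v_inj.
Qed.

Lemma subE n (A B : 'rV[L]_n) j : (A - B) ord0 j = A ord0 j - B ord0 j.
Proof. by rewrite !mxE. Qed.

End Vec.

Theorem proposition1 (F : finFieldType) (L : fieldExtType F) (m n r : nat) :
  \dim {:L} = m -> 3 <= n -> n <= m -> 2 <= 2 * r -> 2 * r < n ->
  exists S : seq 'rV[L]_n,
    uniq S /\ rank_diameter_eq S (2 * r) /\ Vr #|F| m n r < size S.
Proof.
move=> dL n3 nm r1 rn.
have hk : 2 * r <= n by lia.
exists [seq gvec F L n (2 * r) f | f <- enum {ffun 'I_(2 * r) -> 'rV[F]_(dim L)}].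
split; first by rewrite map_inj_uniq ?enum_uniq //; apply: gvec_inj.
split; last first.
  rewrite size_map -cardE card_ffun card_mx card_ord mul1n -dimvf dL -expnM.
  have q2 := card_finNzRing_gt1 F.
  apply: leq_trans (Vr_lt #|F| m n r q2 _ _ _) _; try lia.
  apply: leq_pexp2l; first exact: ltnW q2.
  have := leq_mul (leqnn r) nm; rewrite mulnDr mulnCA mulnA; lia.
split.
  move=> x y /mapP [f _ ->] /mapP [f' _ ->]; rewrite /rdist.
  apply: rk_le => j hj; by rewrite subE !gvec_hi // subrr.
pose B := vbasis (fullv : {vspace L}).
have sB : size B = m by rewrite size_tuple dL.
pose fB := [ffun i : 'I_(2 * r) => v2r (B`_i)].
pose f0 := [ffun i : 'I_(2 * r) => v2r (0 : L)].
exists (gvec F L n (2*r) fB), (gvec F L n (2*r) f0); split.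
- by apply: map_f; rewrite mem_enum.
- by apply: map_f; rewrite mem_enum.
apply/eqP; rewrite eqn_leq; apply/andP; split.
  apply: rk_le => j hj; by rewrite subE !gvec_hi // subrr.
have fr : free (take (2 * r) B).
  apply: (@catl_free _ _ (drop (2 * r) B)); rewrite cat_take_drop.
  exact: basis_free (vbasisP _).
have e : 2 * r = \dim <<take (2 * r) B>>%VS by rewrite (eqP fr) size_takel // sB; lia.
rewrite {1}e /rdist /rk; apply: dimvS; apply/span_subvP => v.
move=> /(nthP 0%R) [i]; rewrite size_takel ?sB; last by lia.
move=> hi <-; rewrite nth_take //.
apply: memv_span; apply/mapP; exists (Ordinal (leq_trans hi hk)); first by rewrite mem_enum.
by rewrite subE !(gvec_lo _ _ _ _ _ (Ordinal hi)) // !ffunE !v2rK subr0.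
Qed.
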